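(* Let $X$ be a real reflexive Banach space, let $T:X\rightrightarrows X^{\ast}$ be maximally monotone, and let $h\in\mathcal{H}(T)$. Then $\breve{T}_h=L^{\mathcal{A}h}$, and $\breve{T}_h\in\mathbb{E}(T)$.
   Context: $X^{\ast}$ is the dual of $X$ with pairing $\langle\cdot,\cdot\rangle$; $\mathbb{R}_+=[0,\infty)$. The dual of $X\times X^{\ast}$ is identified with $X^{\ast}\times X$ via $\langle (x,x^{\ast}),(y^{\ast},y)\rangle=\langle x,y^{\ast}\rangle+\langle y,x^{\ast}\rangle$; for $g:X\times X^{\ast}\to\mathbb{R}\cup\{+\infty\}$, $g^{\ast}(y^{\ast},y)=\sup_{(x,x^{\ast})}\{\langle x,y^{\ast}\rangle+\langle y,x^{\ast}\rangle-g(x,x^{\ast})\}$, and $i(x,x^{\ast})=(x^{\ast},x)$. $\mathcal{H}(T)$ is the family of lower semicontinuous convex $h:X\times X^{\ast}\to\mathbb{R}\cup\{+\infty\}$ with $h(x,x^{\ast})\ge\langle x,x^{\ast}\rangle$ everywhere and equality whenever $x^{\ast}\in T(x)$. $\mathcal{A}h:=\tfrac12(h+h^{\ast}\circ i)$. For $\eta\ge0$ and $z=(x,x^{\ast})$ with $h(z)<\infty$, the $\eta$-subdifferential is $\partial_\eta h(z)=\{(y^{\ast},y)\in X^{\ast}\times X: h(w,w^{\ast})\ge h(z)+\langle w-x,y^{\ast}\rangle+\langle y,w^{\ast}-x^{\ast}\rangle-\eta\ \forall (w,w^{\ast})\}$, and $\partial_\eta h(z)=\emptyset$ if $h(z)=+\infty$.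 Define $\breve{T}_h:\mathbb{R}_+\times X\rightrightarrows X^{\ast}$ by $\breve{T}_h(\epsilon,x)=\{x^{\ast}:(x^{\ast},x)\in\partial_{2\epsilon}h(x,x^{\ast})\}$. For $g\in\mathcal{H}(T)$, $L^{g}(\epsilon,x):=\{x^{\ast}: g(x,x^{\ast})\le\langle x,x^{\ast}\rangle+\epsilon\}$. $\mathbb{E}(T)$ is the family of $E:\mathbb{R}_+\times X\rightrightarrows X^{\ast}$ such that: $(E_1)$ $T(x)\subset E(\epsilon,x)$ for all $\epsilon\ge0$, $x$; $(E_2)$ $E(\epsilon_1,x)\subset E(\epsilon_2,x)$ whenever $0\le\epsilon_1\le\epsilon_2$; $(E_3)$ if $x_1^{\ast}\in E(\epsilon_1,x_1)$, $x_2^{\ast}\in E(\epsilon_2,x_2)$, $\alpha\in[0,1]$, $\hat x=\alpha x_1+(1-\alpha)x_2$, $\hat x^{\ast}=\alpha x_1^{\ast}+(1-\alpha)x_2^{\ast}$, and $\epsilon=\alpha\epsilon_1+(1-\alpha)\epsilon_2+\alpha(1-\alpha)\langle x_1-x_2,x_1^{\ast}-x_2^{\ast}\rangle$, then $\epsilon\ge0$ and $\hat x^{\ast}\in E(\epsilon,\hat x)$. *)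

(* Defs.v *)
From HB Require Import structures.
From mathcomp Require Import all_boot all_order all_algebra.
From mathcomp Require Import all_classical all_reals all_analysis.
Set Implicit Arguments. Unset Strict Implicit. Unset Printing Implicit Defensive.
Import Order.TTheory GRing.Theory Num.Theory.
Import numFieldNormedType.Exports.
Local Open Scope classical_set_scope.
Local Open Scope ring_scope.

Section Duality.
Variables (R : realType) (X : normedModType R).

(* Elements of the topological dual X^* are represented as functions X -> R
   satisfying [is_dual]: linear and continuous. *)
Definition is_dual (f : X -> R) : Prop :=
  (forall (a : R) (u v : X), f (a *: u + v) = a * f u + f v) /\ continuous f.

Definition dnorm (f : X -> R) : R := sup [set `|f x| | x in [set x : X | `|x| <= 1]].

Definition dsub (f g : X -> R) : X -> R := fun z => f z - g z.

(* X is reflexive: the canonical embedding X -> X^** is onto, i.e. every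
   linear functional on X^* continuous for the dual norm is an evaluation. *)
Definition reflexive_space : Prop :=
  forall phi : (X -> R) -> R,
    (forall (a : R) f g, is_dual f -> is_dual g ->
       phi (fun z => a * f z + g z) = a * phi f + phi g) ->
    (forall f, is_dual f -> forall e : R, 0 < e -> exists2 d : R, 0 < d &
       forall g, is_dual g -> dnorm (dsub g f) < d -> `|phi g - phi f| < e) ->
    exists x : X, forall f, is_dual f -> phi f = f x.

Definition monotone_op (T : X -> set (X -> R)) : Prop :=
  forall x y xs ys, T x xs -> T y ys -> 0 <= (xs (x - y) - ys (x - y)).

Definition maximal_monotone (T : X -> set (X -> R)) : Prop :=
  (forall x, T x `<=` is_dual) /\ monotone_op T /\
  forall S : X -> set (X -> R), (forall x, S x `<=` is_dual) -> monotone_op S ->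
    (forall x, T x `<=` S x) -> S = T.

Local Open Scope ereal_scope.

(* functions X × X^* -> R ∪ {+oo}, only relevant on pairs (x, x^* ) with x^* dual *)
Definition lsc_XXs (g : X -> (X -> R) -> \bar R) : Prop :=
  forall (x : X) xs, is_dual xs -> forall a : R, a%:E < g x xs ->
    exists2 d : R, (0 < d)%R & forall (y : X) ys, is_dual ys ->
      (`|y - x| < d)%R -> (dnorm (dsub ys xs) < d)%R -> a%:E < g y ys.

Definition convex_XXs (g : X -> (X -> R) -> \bar R) : Prop :=
  forall (x : X) xs (y : X) ys (l : R), is_dual xs -> is_dual ys -> (0 < l < 1)%R ->
    g (l *: x + (1 - l) *: y)%R (fun z => l * xs z + (1 - l) * ys z)%R
      <= l%:E * g x xs + (1 - l)%:E * g y ys.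

Definition calH (T : X -> set (X -> R)) (h : X -> (X -> R) -> \bar R) : Prop :=
  lsc_XXs h /\ convex_XXs h /\
  (forall x xs, is_dual xs -> (xs x)%:E <= h x xs) /\
  (forall x xs, T x xs -> h x xs = (xs x)%:E).

(* h^* ∘ i : (x, x^* ) |-> h^*(x^*, x)
   = sup_{(w,w^* )} <w, x^*> + <x, w^*> - h(w, w^* ) *)
Definition conj_i (h : X -> (X -> R) -> \bar R) (x : X) (xs : X -> R) : \bar R :=
  ereal_sup [set (xs w + ws x)%:E - h w ws | w in setT & ws in is_dual].

Definition calA (h : X -> (X -> R) -> \bar R) (x : X) (xs : X -> R) : \bar R :=
  (h x xs + conj_i h x xs) * (2^-1)%:E.

(* eta-subdifferential of h at (x, x^* ), elements (y^*, y) *)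
Definition esubdiff (h : X -> (X -> R) -> \bar R) (eta : R) (x : X) (xs : X -> R)
  : set ((X -> R) * X) :=
  [set p | is_dual p.1 /\ h x xs < +oo /\
     forall w ws, is_dual ws ->
       h x xs + (p.1 (w - x) + (ws p.2 - xs p.2) - eta)%R%:E <= h w ws].

Definition Tbreve (h : X -> (X -> R) -> \bar R) (eps : R) (x : X) : set (X -> R) :=
  [set xs | is_dual xs /\ esubdiff h (2 * eps) x xs (xs, x)].

Definition Lg (g : X -> (X -> R) -> \bar R) (eps : R) (x : X) : set (X -> R) :=
  [set xs | is_dual xs /\ g x xs <= (xs x + eps)%:E].

Local Close Scope ereal_scope.

Definition calE (T : X -> set (X -> R)) (E : R -> X -> set (X -> R)) : Prop :=
  (forall eps x, 0 <= eps -> T x `<=` E eps x) /\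
  (forall e1 e2 x, 0 <= e1 -> e1 <= e2 -> E e1 x `<=` E e2 x) /\
  (forall e1 e2 x1 x2 x1s x2s (a : R), 0 <= e1 -> 0 <= e2 ->
     E e1 x1 x1s -> E e2 x2 x2s -> 0 <= a <= 1 ->
     let eps := a * e1 + (1 - a) * e2 + a * (1 - a) * (x1s (x1 - x2) - x2s (x1 - x2)) in
     0 <= eps /\
     E eps (a *: x1 + (1 - a) *: x2) (fun z => a * x1s z + (1 - a) * x2s z)).

End Duality.

(* Main.v *)
Require Import Defs.
From mathcomp Require Import all_boot all_order all_algebra.
From mathcomp Require Import all_classical all_reals all_analysis.
From mathcomp Require Import ring lra.
Import Order.TTheory GRing.Theory Num.Theory.
Import numFieldNormedType.Exports.
Local Open Scope classical_set_scope.
Local Open Scope ring_scope.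

Lemma dual_lin {R : realType} {X : normedModType R} {f : X -> R} :
  is_dual f -> (forall u v, f (u + v) = f u + f v) /\ (forall a u, f (a *: u) = a * f u).
Proof.
case=> L _.
have f0 : f 0 = 0 by have := L 1 0 0; rewrite scaler0 addr0 mul1r; lra.
split=> [u v|a u]; first by have := L 1 u v; rewrite scale1r mul1r.
by have := L a u 0; rewrite addr0 f0 addr0.
Qed.

Lemma dual_sub {R : realType} {X : normedModType R} (f : X -> R) u v :
  is_dual f -> f (u - v) = f u - f v.
Proof.
move=> /dual_lin [A S].
have := A u (- v); have := S (-1) v; rewrite scaleN1r; lra.
Qed.

Lemma dual_combx {R : realType} {X : normedModType R} (f : X -> R) a b u v :
  is_dual f -> f (a *: u + b *: v) = a * f u + b * f v.
Proof. by move=> /dual_lin [A S]; rewrite A !S. Qed.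

Lemma dual_comb {R : realType} {X : normedModType R} (f g : X -> R) (a b : R) :
  is_dual f -> is_dual g -> is_dual (fun z => a * f z + b * g z).
Proof.
move=> df dg; split.
  move=> c u v.
  rewrite (dual_lin df).1 (dual_lin dg).1 !(dual_lin df).2 !(dual_lin dg).2; ring.
move=> z; apply: cvgD; apply: cvgMl_tmp; [exact: df.2 | exact: dg.2].
Qed.

Local Open Scope ereal_scope.

Definition RF {R : realType} {X : normedModType R} (h : X -> (X -> R) -> \bar R)
  (e : R) (x : X) (xs : X -> R) : Prop :=
  is_dual xs /\ exists r : R, h x xs = r%:E /\
    forall w ws (s : R), is_dual ws -> h w ws = s%:E ->
      (xs w + ws x - s <= 2 * xs x - r + 2 * e)%R.

Lemma Tb_iff {R : realType} {X : normedModType R} (h : X -> (X -> R) -> \bar R) e x xs :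
  (forall w ws, is_dual ws -> (ws w)%:E <= h w ws) ->
  Tbreve h e x xs <-> RF h e x xs.
Proof.
move=> H; split.
  case=> dxs [_ [hlt Hs]]; split=> //.
  have := H x xs dxs; move: hlt Hs.
  case: (h x xs) => [r| |] //= _ Hs _; exists r; split=> // w ws s dws Ehw.
  have := Hs w ws dws; rewrite Ehw -EFinD lee_fin (dual_sub _ _ _ dxs); lra.
case=> dxs [r [Ehx Hs]]; split=> //; split=> //=; split; first by rewrite Ehx ltry.
move=> w ws dws; rewrite Ehx.
have := H w ws dws.
case Ehw: (h w ws) => [s| |] //= _; last by rewrite leey.
rewrite -EFinD lee_fin (dual_sub _ _ _ dxs); have := Hs w ws s dws Ehw; lra.
Qed.

Lemma conj_lb {R : realType} {X : normedModType R} (h : X -> (X -> R) -> \bar R) x xs {w ws s} :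
  is_dual ws -> h w ws = s%:E -> (xs w + ws x - s)%:E <= conj_i h x xs.
Proof.
move=> dws Ehw; apply: ereal_sup_ubound.
by exists w => //; exists ws => //; rewrite Ehw EFinB.
Qed.

Lemma Lg_iff {R : realType} {X : normedModType R} (h : X -> (X -> R) -> \bar R) e x xs
  x0 xs0 :
  (forall w ws, is_dual ws -> (ws w)%:E <= h w ws) ->
  is_dual xs0 -> h x0 xs0 = (xs0 x0)%:E ->
  Lg (calA h) e x xs <-> RF h e x xs.
Proof.
move=> H d0 E0.
have lb0 := conj_lb h x xs d0 E0.
split.
  case=> dxs; rewrite /calA.
  have := H x xs dxs.
  case Ehx: (h x xs) => [r| |] //= _.
    have lbx := conj_lb h x xs dxs Ehx.
    move: lbx lb0; case Ec: (conj_i h x xs) => [c| |] //= lbx _.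
      rewrite -EFinD -EFinM lee_fin => Hle; split=> //; exists r; split=> // w ws s dws Ehw.
      have := conj_lb h x xs dws Ehw; rewrite Ec lee_fin; lra.
    by rewrite addey // mulyr gtr0_sg ?invr_gt0 // mul1e leye_eq.
  move: lb0; case: (conj_i h x xs) => [c| |] //= _.
    by rewrite addye // mulyr gtr0_sg ?invr_gt0 // mul1e leye_eq.
  by rewrite addye // mulyr gtr0_sg ?invr_gt0 // mul1e leye_eq.
case=> dxs [r [Ehx Hs]]; split=> //.
have ub : conj_i h x xs <= (2 * xs x - r + 2 * e)%:E.
  apply: ge_ereal_sup => _ [w _ [ws dws <-]].
  have := H w ws dws.
  case Ehw: (h w ws) => [s| |] //= _; last by rewrite addeNy leNye.
  rewrite -EFinB lee_fin; have := Hs w ws s dws Ehw; lra.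
move: ub lb0; rewrite /calA Ehx; case: (conj_i h x xs) => [c| |] //= ub _.
rewrite -EFinD -EFinM lee_fin; move: ub; rewrite lee_fin; lra.
Qed.

Local Close Scope ereal_scope.

Lemma lim_arg {R : realType} (D K : R) :
  0 <= K -> (forall l : R, 0 < l < 1 -> (1 - l) * D <= l * K) -> D <= 0.
Proof.
move=> K0 H; rewrite leNgt; apply/negP => D0.
set l := D / (2 * (D + K)).
have eq : l * (2 * (D + K)) = D by rewrite /l divfK // gt_eqF //; lra.
have l0 : 0 < l by nra.
have l1 : l < 1 by nra.
have := H l; rewrite l0 l1 => /(_ isT); nra.
Qed.

Lemma E1_lemma {R : realType} {X : normedModType R} (h : X -> (X -> R) -> \bar R)
  x xs w ws s :
  convex_XXs h -> (forall w ws, is_dual ws -> ((ws w)%:E <= h w ws)%E) ->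
  is_dual xs -> is_dual ws -> h x xs = (xs x)%:E -> h w ws = s%:E ->
  xs w + ws x - xs x - s <= 0.
Proof.
move=> hc hge dxs dws Ex Ew.
have sK : ws w <= s by have := hge w ws dws; rewrite Ew lee_fin.
apply: (@lim_arg _ _ (s - ws w)); first lra.
move=> l /andP [l0 l1].
have := hc w ws x xs l dws dxs; rewrite l0 l1 => /(_ isT).
have dc := dual_comb _ _ l (1 - l) dws dxs.
have := hge (l *: w + (1 - l) *: x) _ dc.
move=> /le_trans H /H; rewrite Ex Ew -!EFinM -EFinD lee_fin /=.
rewrite (dual_combx _ _ _ _ _ dws) (dual_combx _ _ _ _ _ dxs).
move=> Q.
have Q' : l * ((1 - l) * (xs w + ws x - xs x - s) - l * (s - ws w)) <= 0 by nra.
move: Q'; rewrite pmulr_rle0 //; lra.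
Qed.

Lemma T_nonempty {R : realType} {X : normedModType R} (T : X -> set (X -> R)) :
  maximal_monotone T -> exists x0 xs0, T x0 xs0.
Proof.
move=> [dT [mT maxT]].
apply: contrapT => NE.
pose S := fun x : X => [set f : X -> R | x = 0 /\ f = (fun _ => 0)].
have d0 : is_dual (fun _ : X => (0 : R)).
  by split; [move=> *; rewrite mulr0 addr0 | exact: cst_continuous].
have : S = T.
  apply: maxT.
  - by move=> x f [_ ->].
  - by move=> x y xs ys [_ ->] [_ ->]; rewrite subrr.
  - by move=> x f Tf; exfalso; apply: NE; exists x, f.
move=> ST; apply: NE; exists 0, (fun _ => 0); rewrite -ST; by split.
Qed.

Theorem proposition3p1 (R : realType) (X : completeNormedModType R)
  (T : X -> set (X -> R)) (h : X -> (X -> R) -> \bar R) :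
  reflexive_space X -> maximal_monotone T -> calH T h ->
  (forall eps x, 0 <= eps -> Tbreve h eps x = Lg (calA h) eps x) /\
  calE T (Tbreve h).
Proof.
move=> _ MM [hl [hc [hge hT]]].
have dT := MM.1.
have [x0 [xs0 T0]] := T_nonempty _ MM.
have d0 := dT _ _ T0.
have E0 := hT _ _ T0.
have key e x xs : Tbreve h e x xs <-> RF h e x xs by exact: Tb_iff.
split.
  move=> e x _; apply/seteqP; split=> xs.
    by move/key/(Lg_iff _ _ _ _ _ _ hge d0 E0).
  by move/(Lg_iff _ _ _ _ _ _ hge d0 E0)/key.
split.
  move=> e x e0 xs Txs; apply/key; split; first exact: dT Txs.
  exists (xs x); split; first exact: hT.
  move=> w ws s dws Ehw.
  have := E1_lemma _ _ _ _ _ _ hc hge (dT _ _ Txs) dws (hT _ _ Txs) Ehw; lra.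
split.
  move=> e1 e2 x _ le xs /key [d [r [Er H]]]; apply/key; split=> //.
  exists r; split=> // w ws s dws Ehw; have := H _ _ _ dws Ehw; lra.
move=> e1 e2 x1 x2 x1s x2s a e1p e2p /key [d1 [r1 [E1 H1]]]
  /key [d2 [r2 [E2 H2]]] /andP [a0 a1].
cbv zeta.
have dh := dual_comb _ _ a (1 - a) d1 d2.
have hconv : (h (a *: x1 + (1 - a) *: x2)%R (fun z => a * x1s z + (1 - a) * x2s z)%R
    <= (a * r1 + (1 - a) * r2)%:E)%E.
  have [->|an0] := eqVneq a 0.
    have -> : (fun z => 0 * x1s z + (1 - 0) * x2s z) = x2s.
      by apply/funext => z; rewrite mul0r add0r subr0 mul1r.
    rewrite scale0r add0r subr0 scale1r.
    by rewrite E2 lee_fin; lra.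
  have [->|an1] := eqVneq a 1.
    have -> : (fun z => 1 * x1s z + (1 - 1) * x2s z) = x1s.
      by apply/funext => z; rewrite mul1r subrr mul0r addr0.
    rewrite scale1r subrr scale0r addr0.
    by rewrite E1 lee_fin; lra.
  have al : 0 < a < 1 by rewrite !lt_neqAle eq_sym an0 an1 a0 a1.
  have := hc x1 x1s x2 x2s a d1 d2 al.
  by rewrite E1 E2 -!EFinM -EFinD.
move: hconv.
have := hge (a *: x1 + (1 - a) *: x2) _ dh.
case Eh: (h _ _) => [rh| |] //= lb hconv.
move: lb hconv; rewrite !lee_fin => lb hconv.
have ex1 := dual_combx x1s a (1 - a) x1 x2 d1.
have ex2 := dual_combx x2s a (1 - a) x1 x2 d2.
have m1 := dual_sub x1s x1 x2 d1.
have m2 := dual_sub x2s x1 x2 d2.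
have K1 := H1 _ _ _ dh Eh.
have K2 := H2 _ _ _ dh Eh.
rewrite /= ex1 ex2 in lb K1 K2.
rewrite m1 m2.
split.
  have K1' := ler_wpM2l a0 K1.
  have a1' : 0 <= 1 - a by lra.
  have K2' := ler_wpM2l a1' K2.
  nra.
apply/key; split=> //; exists rh; split=> // w ws s dws Ehw.
have J1 := ler_wpM2l a0 (H1 _ _ _ dws Ehw).
have a1' : 0 <= 1 - a by lra.
have J2 := ler_wpM2l a1' (H2 _ _ _ dws Ehw).
rewrite /= (dual_combx _ _ _ _ _ dws) ex1 ex2.
nra.
Qed.
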